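(* Let $X,Y:[0,T]\to\mathbb R^2$ be $C^1$ and $\Psi:\mathbb R^2\to\mathbb R^2$ be $C^1$ with $\dot Y=\Psi(Y)$. Let $E_+=\{\Psi_1>0\}$, $E_-=\{\Psi_1<0\}$. Suppose that $X(0)=Y(0)\in E_+\cup E_-$; that for $t\in(0,T]$, $\Psi_1(X(t)),\Psi_1(Y(t))>0$ if $X(0)\in E_+$ and $\Psi_1(X(t)),\Psi_1(Y(t))<0$ if $X(0)\in E_-$; and that $\dot X\le_2\Psi(X)$ (resp. $\dot X\ge_2\Psi(X)$) on $[0,T]$. Then $f_X=X_2\circ X_1^{-1}$ and $f_Y=Y_2\circ Y_1^{-1}$ are well defined, differentiable for $u\ne X_1(0)$, and $f_X(u)\le f_Y(u)$ (resp. $f_X(u)\ge f_Y(u)$) on the intersection of their domains.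
   Context: For $v,w\in\mathbb R^2$, $v\le_2w$ means $v_1=w_1$ and $v_2\le w_2$; $v\ge_2 w$ is defined analogously. *)

(* Defs.v *)
From Stdlib Require Import Reals.
Open Scope R_scope.

(* l is the derivative of f at t relative to the set D (one-sided at
   boundary points of an interval). *)
Definition has_deriv_within (D : R -> Prop) (f : R -> R) (t l : R) : Prop :=
  forall eps : R, 0 < eps -> exists delta : R, 0 < delta /\
    forall h : R, h <> 0 -> Rabs h < delta -> D (t + h) ->
      Rabs ((f (t + h) - f t) / h - l) < eps.

Definition continuous_within (D : R -> Prop) (f : R -> R) (t : R) : Prop :=
  forall eps : R, 0 < eps -> exists delta : R, 0 < delta /\
    forall s : R, D s -> Rabs (s - t) < delta -> Rabs (f s - f t) < eps.

Definition Icc0 (T : R) (t : R) : Prop := 0 <= t <= T.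

Definition continuous2 (g : R -> R -> R) : Prop :=
  forall x y eps : R, 0 < eps -> exists delta : R, 0 < delta /\
    forall x' y' : R, Rabs (x' - x) < delta -> Rabs (y' - y) < delta ->
      Rabs (g x' y' - g x y) < eps.

Definition C1_R2 (g : R -> R -> R) : Prop :=
  exists gx gy : R -> R -> R,
    (forall x y, derivable_pt_lim (fun s => g s y) x (gx x y)) /\
    (forall x y, derivable_pt_lim (fun s => g x s) y (gy x y)) /\
    continuous2 gx /\ continuous2 gy.

Definition inj_on (D : R -> Prop) (f : R -> R) : Prop :=
  forall s t, D s -> D t -> f s = f t -> s = t.

Definition image (D : R -> Prop) (f : R -> R) (u : R) : Prop :=
  exists t, D t /\ f t = u.

(* Main.v *)
Require Import Defs.
From Stdlib Require Import Reals Lra Psatz Classical ClassicalEpsilon.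
Open Scope R_scope.

Definition clamp (a b x : R) := Rmax a (Rmin b x).

Lemma clamp_in a b x : a <= b -> a <= clamp a b x <= b.
Proof. intros; unfold clamp, Rmax, Rmin; repeat destruct Rle_dec; lra. Qed.
Lemma clamp_id a b x : a <= x <= b -> clamp a b x = x.
Proof. intros; unfold clamp, Rmax, Rmin; repeat destruct Rle_dec; lra. Qed.
Lemma clamp_lip a b x y : a <= b -> Rabs (clamp a b x - clamp a b y) <= Rabs (x - y).
Proof. intros; unfold clamp, Rmax, Rmin; repeat destruct Rle_dec;
  unfold Rabs; repeat destruct Rcase_abs; lra. Qed.

Lemma clamp_cont a b f t : a <= b ->
  (forall x, a <= x <= b -> continuous_within (fun s => a <= s <= b) f x) ->
  continuity_pt (fun x => f (clamp a b x)) t.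
Proof.
  intros Hab Hc. unfold continuity_pt, continue_in, limit1_in, limit_in. simpl. unfold R_dist.
  intros eps Heps.
  destruct (Hc (clamp a b t) (clamp_in a b t Hab) eps Heps) as [d [Hd H]].
  exists d; split; [lra|]. intros x [_ Hx].
  apply H. apply clamp_in; auto. eapply Rle_lt_trans; [apply clamp_lip; auto| exact Hx].
Qed.

Lemma clamp_deriv a b f t l : a < t < b -> derivable_pt_lim f t l ->
  derivable_pt_lim (fun x => f (clamp a b x)) t l.
Proof.
  intros Ht H eps Heps. destruct (H eps Heps) as [d Hd].
  assert (P: 0 < Rmin d (Rmin (t-a) (b-t))) by (apply Rmin_pos; [apply cond_pos| apply Rmin_pos; lra]).
  exists (mkposreal _ P). intros h Hh Hh2. simpl in Hh2.
  pose proof (Rmin_l d (Rmin (t-a) (b-t))). pose proof (Rmin_r d (Rmin (t-a) (b-t))).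
  pose proof (Rmin_l (t-a) (b-t)). pose proof (Rmin_r (t-a) (b-t)).
  pose proof (Rle_abs h). pose proof (Rle_abs (-h)). rewrite Rabs_Ropp in *.
  rewrite !clamp_id by lra. apply Hd; auto. lra.
Qed.

Lemma mvt_in (f df : R -> R) a b : a < b ->
 (forall t, a <= t <= b -> continuous_within (fun s => a <= s <= b) f t) ->
 (forall t, a < t < b -> derivable_pt_lim f t (df t)) ->
 exists c, a < c < b /\ f b - f a = df c * (b - a).
Proof.
  intros Hab Hc Hd.
  set (g := fun x => f (clamp a b x)).
  assert (pr1 : forall c, a < c < b -> derivable_pt g c).
  { intros c Hc'. exists (df c). apply clamp_deriv; auto. }
  assert (pr2 : forall c, a < c < b -> derivable_pt id c) by (intros; apply derivable_pt_id).
  destruct (MVT g id a b pr1 pr2 Hab) as [c [P H]].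
  - intros; apply clamp_cont; auto; lra.
  - intros; apply derivable_continuous_pt, derivable_pt_id.
  - exists c; split; auto.
    rewrite (derive_pt_eq_0 g c (df c) (pr1 c P)) in H by (apply clamp_deriv; auto).
    rewrite (derive_pt_eq_0 id c 1 (pr2 c P)) in H by apply derivable_pt_lim_id.
    unfold g, id in H. rewrite !clamp_id in H by lra. nra.
Qed.

Lemma ivt_in (g : R->R) a b u : a <= b ->
 (forall t, a <= t <= b -> continuous_within (fun s => a <= s <= b) g t) ->
 (g a <= u <= g b \/ g b <= u <= g a) -> exists z, a <= z <= b /\ g z = u.
Proof.
  intros Hab Hc Hu.
  assert (Hcont: continuity (fun x => g (clamp a b x))) by (intro; apply clamp_cont; auto).
  destruct (Req_dec u (g a)) as [E|E]. { exists a; split; [lra|auto]. }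
  destruct (Req_dec u (g b)) as [E'|E']. { exists b; split; [lra|auto]. }
  assert (a < b). { destruct Hab; auto. subst. lra. }
  destruct Hu as [Hu|Hu].
  - destruct (IVT (fun x => g (clamp a b x) - u) a b) as [z [Hz Hz']].
    + apply continuity_minus; auto; apply continuity_const; intros ? ?; auto.
    + lra.
    + rewrite clamp_id; lra.
    + rewrite clamp_id; lra.
    + exists z; split; auto. rewrite clamp_id in Hz' by auto. lra.
  - destruct (IVT (fun x => u - g (clamp a b x)) a b) as [z [Hz Hz']].
    + apply continuity_minus; auto; apply continuity_const; intros ? ?; auto.
    + lra.
    + rewrite clamp_id; lra.
    + rewrite clamp_id; lra.
    + exists z; split; auto. rewrite clamp_id in Hz' by auto. lra.
Qed.

Lemma deriv_cont D f t l : has_deriv_within D f t l -> continuous_within D f t.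
Proof.
  intros H eps Heps.
  destruct (H 1 Rlt_0_1) as [d [Hd Hq]].
  pose proof (Rabs_pos l).
  assert (Hk: 0 < eps / (Rabs l + 1)) by (apply Rdiv_lt_0_compat; lra).
  exists (Rmin d (eps / (Rabs l + 1))). split. { apply Rmin_pos; lra. }
  intros s Ds Hs.
  pose proof (Rmin_l d (eps / (Rabs l + 1))). pose proof (Rmin_r d (eps / (Rabs l + 1))).
  destruct (Req_dec s t) as [->|Hne]. { rewrite Rminus_diag, Rabs_R0; lra. }
  set (h := s - t) in *.
  assert (Hh: h <> 0) by (unfold h; lra).
  specialize (Hq h Hh). replace (t + h) with s in Hq by (unfold h; ring).
  specialize (Hq ltac:(lra) Ds).
  set (q := (f s - f t) / h) in *.
  assert (E: f s - f t = q * h) by (unfold q; field; auto). rewrite E, Rabs_mult.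
  assert (Hq2: Rabs q < Rabs l + 1).
  { replace q with ((q - l) + l) by ring. pose proof (Rabs_triang (q-l) l). lra. }
  assert (Ee: eps = (Rabs l + 1) * (eps / (Rabs l + 1))) by (field; lra).
  pose proof (Rabs_pos h). pose proof (Rabs_pos q). nra.
Qed.

Lemma hdw_pt D f t l : has_deriv_within D f t l ->
  (exists r, 0 < r /\ forall x, Rabs (x - t) < r -> D x) -> derivable_pt_lim f t l.
Proof.
  intros H [r [Hr HD]] eps Heps. destruct (H eps Heps) as [d [Hd Hq]].
  assert (P: 0 < Rmin d r) by (apply Rmin_pos; lra).
  exists (mkposreal _ P). intros h Hh Hh2. simpl in Hh2.
  pose proof (Rmin_l d r). pose proof (Rmin_r d r).
  apply Hq; auto. lra. apply HD. replace (t+h-t) with h by ring. lra.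
Qed.

Lemma cw_limit D f t : continuous_within D f t <-> limit1_in f D (f t) t.
Proof.
  unfold continuous_within, limit1_in, limit_in; simpl; unfold R_dist; split.
  - intros H eps He; destruct (H eps He) as [d [Hd Hh]]; exists d; split; auto.
    intros x [Dx Hx]; auto.
  - intros H eps He; destruct (H eps He) as [d [Hd Hh]]; exists d; split; auto.
Qed.

Lemma cw_restrict D D' f t : continuous_within D f t -> (forall x, D' x -> D x) ->
  continuous_within D' f t.
Proof.
  intros H HD eps He; destruct (H eps He) as [d [Hd Hh]]; exists d; split; auto.
Qed.

Lemma cw_comp Df Dg f g t : continuous_within Dg g (f t) -> continuous_within Df f t ->
  (forall x, Df x -> Dg (f x)) -> continuous_within Df (fun x => g (f x)) t.
Proof.
  intros Hg Hf HD eps He. destruct (Hg eps He) as [d [Hd Hh]].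
  destruct (Hf d Hd) as [d' [Hd' Hh']]. exists d'; split; auto.
Qed.

Lemma cw_mult D f g t : continuous_within D f t -> continuous_within D g t ->
  continuous_within D (fun x => f x * g x) t.
Proof.
  intros Hf Hg. apply cw_limit. apply limit_mul; apply cw_limit; auto.
Qed.

Lemma cw_minus D f g t : continuous_within D f t -> continuous_within D g t ->
  continuous_within D (fun x => f x - g x) t.
Proof.
  intros Hf Hg. apply cw_limit. apply limit_minus; apply cw_limit; auto.
Qed.

Lemma cw_pt D f t : continuity_pt f t -> continuous_within D f t.
Proof.
  unfold continuity_pt, continue_in, limit1_in, limit_in; simpl; unfold R_dist.
  intros H eps He; destruct (H eps He) as [d [Hd Hh]]; exists d; split; auto.
  intros s Ds Hs. destruct (Req_dec t s) as [->|Hne].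
  - rewrite Rminus_diag, Rabs_R0; lra.
  - apply Hh; split; auto. split; [exact I| auto].
Qed.

Lemma cw_const D k t : continuous_within D (fun _ => k) t.
Proof. intros eps He; exists 1; split; [lra|]; intros; rewrite Rminus_diag, Rabs_R0; lra. Qed.

Definition invf (D : R -> Prop) (g : R -> R) (u : R) : R :=
  match excluded_middle_informative (exists t, D t /\ g t = u) with
  | left H => proj1_sig (constructive_indefinite_description _ H)
  | right _ => 0 end.

Lemma invf_spec D g t : inj_on D g -> D t -> invf D g (g t) = t.
Proof.
  intros Hi Dt. unfold invf. destruct excluded_middle_informative as [H|H].
  - destruct (constructive_indefinite_description _ H) as [s [Ds Hs]]. simpl. apply Hi; auto.
  - exfalso; apply H; exists t; auto.
Qed.

Lemma inv_cont (h : R -> R) T t :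
  (forall x y, Icc0 T x -> Icc0 T y -> x < y -> h x < h y) -> Icc0 T t ->
  forall e, 0 < e -> exists eta, 0 < eta /\
    forall s, Icc0 T s -> Rabs (h s - h t) < eta -> Rabs (s - t) < e.
Proof.
  intros Hm Ht e He. unfold Icc0 in *.
  assert (E1: exists eta1, 0 < eta1 /\ forall s, 0 <= s <= T -> t + e <= s -> eta1 <= h s - h t).
  { destruct (Rle_dec (t+e) T) as [H1|H1].
    - exists (h (t+e) - h t). split. { assert (h t < h (t+e)) by (apply Hm; lra). lra. }
      intros s Hs Hs2. destruct (Req_dec s (t+e)) as [->|Hne]; [lra|].
      assert (h (t+e) < h s) by (apply Hm; lra). lra.
    - exists 1; split; [lra|]. intros; lra. }
  assert (E2: exists eta2, 0 < eta2 /\ forall s, 0 <= s <= T -> s <= t - e -> eta2 <= h t - h s).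
  { destruct (Rle_dec 0 (t-e)) as [H1|H1].
    - exists (h t - h (t-e)). split. { assert (h (t-e) < h t) by (apply Hm; lra). lra. }
      intros s Hs Hs2. destruct (Req_dec s (t-e)) as [->|Hne]; [lra|].
      assert (h s < h (t-e)) by (apply Hm; lra). lra.
    - exists 1; split; [lra|]. intros; lra. }
  destruct E1 as [e1 [He1 H1]]. destruct E2 as [e2 [He2 H2]].
  exists (Rmin e1 e2); split. { apply Rmin_pos; lra. }
  intros s Hs Hd. pose proof (Rmin_l e1 e2). pose proof (Rmin_r e1 e2).
  pose proof (Rle_abs (h s - h t)). pose proof (Rle_abs (-(h s - h t))). rewrite Rabs_Ropp in *.
  destruct (Rlt_dec (Rabs (s - t)) e) as [ok|nok]; auto. exfalso.
  unfold Rabs in nok; destruct Rcase_abs in nok.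
  - specialize (H2 s Hs ltac:(lra)). lra.
  - specialize (H1 s Hs ltac:(lra)). lra.
Qed.

Lemma quot_close a b A B e1 : a <> 0 -> Rabs (A - a) < e1 -> Rabs (B - b) < e1 -> e1 <= Rabs a / 2 ->
  Rabs (B / A - b / a) <= 2 * e1 * (Rabs a + Rabs b) / (Rabs a * Rabs a).
Proof.
  intros Ha H1 H2 H3.
  pose proof (Rabs_pos_lt a Ha) as Hpa. pose proof (Rabs_pos b).
  assert (HA: Rabs a / 2 < Rabs A).
  { pose proof (Rabs_triang (a - A) A) as Ht. replace (a - A + A) with a in Ht by ring.
    rewrite <- Rabs_Ropp in H1. replace (-(A-a)) with (a - A) in H1 by ring. lra. }
  assert (HA0: A <> 0). { intro E; rewrite E, Rabs_R0 in HA; lra. }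
  replace (B / A - b / a) with ((a * (B - b) - b * (A - a)) / (a * A)) by (field; auto).
  unfold Rdiv at 1. rewrite Rabs_mult, Rabs_inv, Rabs_mult.
  assert (HN: Rabs (a * (B - b) - b * (A - a)) <= e1 * (Rabs a + Rabs b)).
  { unfold Rminus at 1. eapply Rle_trans; [apply Rabs_triang|].
    rewrite Rabs_Ropp, !Rabs_mult. pose proof (Rabs_pos (B-b)). pose proof (Rabs_pos (A-a)). nra. }
  pose proof (Rabs_pos (a * (B - b) - b * (A - a))).
  set (N := Rabs (a * (B - b) - b * (A - a))) in *.
  set (x := Rabs a) in *. set (y := Rabs A) in *. set (z := Rabs b) in *.
  unfold Rdiv. apply Rle_trans with (e1 * (x + z) * / (x * y)).
  { apply Rmult_le_compat_r; auto. left; apply Rinv_0_lt_compat; nra. }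
  assert (Hinv: / (x * y) <= 2 * / (x * x)).
  { rewrite !Rinv_mult.
    assert (/ y <= 2 * / x).
    { apply Rle_trans with (/ (x/2)). { apply Rinv_le_contravar; lra. } right; field; lra. }
    pose proof (Rinv_0_lt_compat x Hpa). nra. }
  assert (0 <= e1 * (x + z)) by nra. nra.
Qed.

Lemma inv_deriv (D : R -> Prop) (g f : R -> R) t a b :
  inj_on D g -> D t -> has_deriv_within D g t a -> has_deriv_within D f t b -> a <> 0 ->
  (forall e, 0<e -> exists eta, 0<eta /\ forall s, D s -> Rabs (g s - g t) < eta -> Rabs (s - t) < e) ->
  has_deriv_within (image D g) (fun u => f (invf D g u)) (g t) (b / a).
Proof.
  intros Hi Dt Hg Hf Ha Hc eps He.
  pose proof (Rabs_pos_lt a Ha). pose proof (Rabs_pos b).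
  set (e1 := Rmin (Rabs a / 2) (eps * (Rabs a * Rabs a) / (4 * (Rabs a + Rabs b)))).
  assert (He1: 0 < e1).
  { apply Rmin_pos; [lra|]. apply Rdiv_lt_0_compat; [|lra]. apply Rmult_lt_0_compat; nra. }
  pose proof (Rmin_l (Rabs a / 2) (eps * (Rabs a * Rabs a) / (4 * (Rabs a + Rabs b)))) as Hm1.
  pose proof (Rmin_r (Rabs a / 2) (eps * (Rabs a * Rabs a) / (4 * (Rabs a + Rabs b)))) as Hm2.
  fold e1 in Hm1, Hm2.
  destruct (Hg e1 He1) as [d1 [Hd1 Hq1]].
  destruct (Hf e1 He1) as [d2 [Hd2 Hq2]].
  destruct (Hc (Rmin d1 d2) (Rmin_pos _ _ Hd1 Hd2)) as [eta [Heta Hs]].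
  exists eta; split; auto.
  intros h Hh Hh2 Him; unfold image in Him; destruct Him as [s [Ds Hgs]].
  rewrite invf_spec by auto. rewrite <- Hgs, invf_spec by auto.
  assert (Hst: Rabs (s - t) < Rmin d1 d2).
  { apply Hs; auto. rewrite Hgs. replace (g t + h - g t) with h by ring. auto. }
  pose proof (Rmin_l d1 d2). pose proof (Rmin_r d1 d2).
  assert (Hk : s - t <> 0).
  { intro E. apply Hh. assert (s = t) by lra. subst. lra. }
  specialize (Hq1 (s - t) Hk ltac:(lra)). specialize (Hq2 (s - t) Hk ltac:(lra)).
  replace (t + (s - t)) with s in Hq1, Hq2 by ring.
  specialize (Hq1 Ds). specialize (Hq2 Ds).
  assert (Hh': h = g s - g t) by lra. rewrite Hh' in Hh |- *.
  replace ((f s - f t) / (g s - g t)) with (((f s - f t) / (s - t)) / ((g s - g t) / (s - t)))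
    by (field; split; auto).
  eapply Rle_lt_trans; [apply quot_close; eauto|].
  assert (Hab: 0 < Rabs a + Rabs b) by lra.
  apply Rle_lt_trans with (2 * (eps * (Rabs a * Rabs a) / (4 * (Rabs a + Rabs b))) * (Rabs a + Rabs b) / (Rabs a * Rabs a)).
  { unfold Rdiv. apply Rmult_le_compat_r. { left; apply Rinv_0_lt_compat; nra. }
    apply Rmult_le_compat_r; lra. }
  replace (2 * (eps * (Rabs a * Rabs a) / (4 * (Rabs a + Rabs b))) * (Rabs a + Rabs b) / (Rabs a * Rabs a)) with (eps/2) by (field; nra). lra.
Qed.

Lemma exp_lin_deriv K x : derivable_pt_lim (fun y => exp (- K * y)) x (exp (- K * x) * (- K)).
Proof.
  assert (H1: derivable_pt_lim (fun y => - K * y) x (- K)).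
  { pose proof (derivable_pt_lim_scal (fun y => y) (-K) x 1 (derivable_pt_lim_id x)) as H.
    unfold mult_real_fct in H. rewrite Rmult_1_r in H. exact H. }
  apply (derivable_pt_lim_comp (fun y => - K * y) exp x (-K) (exp (- K * x)) H1).
  apply derivable_pt_lim_exp.
Qed.

Lemma cmp (a b : R) (w dw : R -> R) :
  a <= b ->
  (forall t, a <= t <= b -> continuous_within (fun x => a <= x <= b) w t) ->
  (forall t, a < t < b -> derivable_pt_lim w t (dw t)) ->
  w a <= 0 ->
  (forall c, a <= c < b -> w c = 0 -> exists K d, 0 < d /\
      forall t, c < t < c + d -> t < b -> 0 < w t -> dw t <= K * w t) ->
  forall t, a <= t <= b -> w t <= 0.
Proof.
  intros Hab Hc Hd Ha Hloc t1 Ht1.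
  destruct (Rle_dec (w t1) 0) as [ok|nok]; auto. exfalso. apply Rnot_le_lt in nok.
  assert (Hat: a < t1) by (destruct Ht1 as [[?|?] ?]; auto; subst; lra).
  set (E := fun x => a <= x <= t1 /\ w x <= 0).
  assert (Hb: bound E) by (exists t1; intros x [Hx _]; lra).
  assert (He: exists x, E x) by (exists a; unfold E; lra).
  destruct (completeness E Hb He) as [c [Hub Hlub]].
  assert (Hac: a <= c) by (apply Hub; unfold E; lra).
  assert (Hct: c <= t1) by (apply Hlub; intros x [Hx _]; lra).
  assert (Cl1: forall x, c < x <= t1 -> 0 < w x).
  { intros x Hx. destruct (Rlt_dec 0 (w x)) as [p|p]; auto. exfalso.
    assert (Ex: E x) by (split; lra). specialize (Hub x Ex). lra. }
  assert (Hcc := Hc c ltac:(lra)).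
  assert (Cl2: w c <= 0).
  { destruct (Rle_dec (w c) 0) as [p|p]; auto. exfalso. apply Rnot_le_lt in p.
    destruct (Hcc (w c) p) as [d [Hd0 Hdd]].
    assert (c <= c - d/2); [|lra]. apply Hlub. intros x [Hx Hwx].
    destruct (Rle_dec x (c - d/2)) as [q|q]; auto. exfalso.
    assert (x <= c) by (apply Hub; split; auto).
    specialize (Hdd x ltac:(lra) ltac:(rewrite Rabs_left1 by lra; lra)).
    apply Rabs_def2 in Hdd. lra. }
  assert (Hct2: c < t1) by (destruct Hct; auto; subst; lra).
  assert (Cl3: w c = 0).
  { destruct Cl2 as [p|p]; auto. exfalso.
    destruct (Hcc (- w c) ltac:(lra)) as [d [Hd0 Hdd]].
    pose proof (Rmin_l (c + d/2) t1). pose proof (Rmin_r (c + d/2) t1).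
    assert (c < Rmin (c + d/2) t1) by (apply Rmin_glb_lt; lra).
    specialize (Hdd (Rmin (c + d/2) t1) ltac:(lra) ltac:(rewrite Rabs_right by lra; lra)).
    apply Rabs_def2 in Hdd. specialize (Cl1 (Rmin (c + d/2) t1) ltac:(lra)). lra. }
  destruct (Hloc c ltac:(lra) Cl3) as [K [d [Hd0 HK]]].
  set (u2 := Rmin (c + d/2) ((c+t1)/2)).
  pose proof (Rmin_l (c + d/2) ((c+t1)/2)). pose proof (Rmin_r (c + d/2) ((c+t1)/2)).
  assert (Hu2: c < u2) by (apply Rmin_glb_lt; lra). fold u2 in H, H0.
  set (v := fun x => exp (- K * x) * w x).
  set (dv := fun x => exp (- K * x) * (- K) * w x + exp (- K * x) * dw x).
  destruct (mvt_in v dv c u2 Hu2) as [xi [Hxi Hmvt]].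
  - intros t Ht. unfold v. apply cw_mult.
    + apply cw_pt. apply derivable_continuous_pt. exists (exp (- K * t) * (- K)). apply exp_lin_deriv.
    + apply cw_restrict with (fun x => a <= x <= b). apply Hc; lra. intros; lra.
  - intros t Ht. unfold v, dv.
    apply (derivable_pt_lim_mult (fun y => exp (- K * y)) w t). apply exp_lin_deriv. apply Hd; lra.
  - unfold v, dv in Hmvt. rewrite Cl3 in Hmvt.
    specialize (HK xi ltac:(lra) ltac:(lra) (Cl1 xi ltac:(lra))).
    pose proof (exp_pos (- K * xi)). pose proof (exp_pos (- K * u2)).
    pose proof (Cl1 u2 ltac:(lra)). pose proof (Cl1 xi ltac:(lra)).
    assert (exp (- K * xi) * (- K) * w xi + exp (- K * xi) * dw xi <= 0) by nra.
    nra.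
Qed.

Lemma lip1d (f df : R -> R) c0 r M :
  (forall x, derivable_pt_lim f x (df x)) ->
  (forall x, Rabs (x - c0) < r -> Rabs (df x) <= M) ->
  forall y y', Rabs (y - c0) < r -> Rabs (y' - c0) < r -> Rabs (f y - f y') <= M * Rabs (y - y').
Proof.
  intros Hd Hb.
  assert (G: forall y y', y' < y -> Rabs (y - c0) < r -> Rabs (y' - c0) < r ->
     Rabs (f y - f y') <= M * Rabs (y - y')).
  { intros y y' Hlt H1 H2. destruct (MVT_cor2 f df y' y Hlt) as [c [Hc Hc2]].
    { intros; apply Hd. }
    rewrite Hc, Rabs_mult. apply Rmult_le_compat_r. apply Rabs_pos. apply Hb.
    apply Rabs_def2 in H1. apply Rabs_def2 in H2. apply Rabs_def1; lra. }
  intros y y' H1 H2. destruct (Rtotal_order y y') as [h|[h|h]].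
  - rewrite <- Rabs_Ropp. replace (- (f y - f y')) with (f y' - f y) by ring.
    rewrite <- (Rabs_Ropp (y - y')). replace (- (y - y')) with (y' - y) by ring. auto.
  - subst. rewrite !Rminus_diag, Rabs_R0. assert (0 <= M).
    { specialize (Hb y' H1). pose proof (Rabs_pos (df y')). lra. } lra.
  - auto.
Qed.

Lemma C1_lip_y g : C1_R2 g -> forall x0 y0, exists r M, 0 < r /\ 0 < M /\
  forall x y y', Rabs (x - x0) < r -> Rabs (y - y0) < r -> Rabs (y' - y0) < r ->
    Rabs (g x y - g x y') <= M * Rabs (y - y').
Proof.
  intros [gx [gy [Hx [Hy [Cx Cy]]]]] x0 y0.
  destruct (Cy x0 y0 1 Rlt_0_1) as [d [Hd Hdd]].
  exists d, (Rabs (gy x0 y0) + 1). split; auto. split. pose proof (Rabs_pos (gy x0 y0)); lra.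
  intros x y y' H1 H2 H3.
  apply (lip1d (fun s => g x s) (gy x) y0 d); auto.
  intros s Hs. specialize (Hdd x s H1 Hs).
  pose proof (Rabs_triang (gy x s - gy x0 y0) (gy x0 y0)).
  replace (gy x s - gy x0 y0 + gy x0 y0) with (gy x s) in H by ring. lra.
Qed.

Lemma C1_lip_x g : C1_R2 g -> forall x0 y0, exists r M, 0 < r /\ 0 < M /\
  forall x x' y, Rabs (x - x0) < r -> Rabs (x' - x0) < r -> Rabs (y - y0) < r ->
    Rabs (g x y - g x' y) <= M * Rabs (x - x').
Proof.
  intros [gx [gy [Hx [Hy [Cx Cy]]]]] x0 y0.
  destruct (Cx x0 y0 1 Rlt_0_1) as [d [Hd Hdd]].
  exists d, (Rabs (gx x0 y0) + 1). split; auto. split. pose proof (Rabs_pos (gx x0 y0)); lra.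
  intros x x' y H1 H2 H3.
  apply (lip1d (fun s => g s y) (fun s => gx s y) x0 d); auto.
  intros s Hs. specialize (Hdd s y Hs H3).
  pose proof (Rabs_triang (gx s y - gx x0 y0) (gx x0 y0)).
  replace (gx s y - gx x0 y0 + gx x0 y0) with (gx s y) in H by ring. lra.
Qed.

Lemma C1_cont2 g : C1_R2 g -> continuous2 g.
Proof.
  intros HC x0 y0 eps He.
  destruct (C1_lip_y g HC x0 y0) as [r1 [M1 [Hr1 [HM1 H1]]]].
  destruct (C1_lip_x g HC x0 y0) as [r2 [M2 [Hr2 [HM2 H2]]]].
  set (d := Rmin (Rmin r1 r2) (eps / (M1 + M2))).
  assert (Hk: 0 < eps / (M1 + M2)) by (apply Rdiv_lt_0_compat; lra).
  pose proof (Rmin_l (Rmin r1 r2) (eps / (M1 + M2))). pose proof (Rmin_r (Rmin r1 r2) (eps / (M1 + M2))).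
  pose proof (Rmin_l r1 r2). pose proof (Rmin_r r1 r2). fold d in H, H0.
  exists d. split. { apply Rmin_pos; [apply Rmin_pos|]; lra. }
  intros x y Hx Hy.
  assert (A1: Rabs (g x y - g x y0) <= M1 * Rabs (y - y0)).
  { apply H1; try lra. rewrite Rminus_diag, Rabs_R0; lra. }
  assert (A2: Rabs (g x y0 - g x0 y0) <= M2 * Rabs (x - x0)).
  { apply H2; try lra. rewrite Rminus_diag, Rabs_R0; lra. rewrite Rminus_diag, Rabs_R0; lra. }
  pose proof (Rabs_triang (g x y - g x y0) (g x y0 - g x0 y0)).
  replace (g x y - g x y0 + (g x y0 - g x0 y0)) with (g x y - g x0 y0) in H5 by ring.
  assert (Ee: eps = (M1 + M2) * (eps / (M1 + M2))) by (field; lra).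
  pose proof (Rabs_pos (x - x0)). pose proof (Rabs_pos (y - y0)).
  nra.
Qed.

Lemma key_alg p1 p2 z1 z2 L1 L2 B1 B2 m d : 0 < m -> m < Rabs z1 -> Rabs z1 <= B1 -> Rabs z2 <= B2 ->
  Rabs (p1 - z1) <= L1 * d -> Rabs (p2 - z2) <= L2 * d -> 0 <= L1 -> 0 <= L2 -> 0 <= d ->
  Rabs (p2 - z2 * p1 / z1) <= (B1 * L2 + B2 * L1) / m * d.
Proof.
  intros Hm Hz1 HB1 HB2 H1 H2 HL1 HL2 Hd.
  assert (Hz: z1 <> 0). { intro E; rewrite E, Rabs_R0 in Hz1; lra. }
  replace (p2 - z2 * p1 / z1) with ((z1 * (p2 - z2) - z2 * (p1 - z1)) * / z1) by (field; auto).
  rewrite Rabs_mult, Rabs_inv.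
  assert (HN: Rabs (z1 * (p2 - z2) - z2 * (p1 - z1)) <= (B1 * L2 + B2 * L1) * d).
  { unfold Rminus at 1. eapply Rle_trans; [apply Rabs_triang|].
    rewrite Rabs_Ropp, !Rabs_mult. pose proof (Rabs_pos (p2 - z2)). pose proof (Rabs_pos (p1 - z1)).
    pose proof (Rabs_pos z1). pose proof (Rabs_pos z2). nra. }
  assert (Hi: / Rabs z1 <= / m) by (apply Rinv_le_contravar; lra).
  pose proof (Rinv_0_lt_compat (Rabs z1) ltac:(lra)).
  pose proof (Rabs_pos (z1 * (p2 - z2) - z2 * (p1 - z1))).
  assert (0 <= (B1 * L2 + B2 * L1) * d).
  { pose proof (Rabs_pos z1). pose proof (Rabs_pos z2). apply Rmult_le_pos; nra. }
  unfold Rdiv. replace ((B1 * L2 + B2 * L1) * / m * d) with ((B1 * L2 + B2 * L1) * d * / m) by ring.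
  apply Rmult_le_compat; auto; lra.
Qed.

Lemma key_local P1 P2 : C1_R2 P1 -> C1_R2 P2 -> forall x0 y0, P1 x0 y0 <> 0 ->
  exists r K, 0 < r /\ forall x y z, Rabs (x - x0) < r -> Rabs (y - y0) < r -> Rabs (z - y0) < r ->
    Rabs (P2 x y - P2 x z * P1 x y / P1 x z) <= K * Rabs (y - z).
Proof.
  intros H1 H2 x0 y0 Hp.
  destruct (C1_lip_y P1 H1 x0 y0) as [r1 [L1 [Hr1 [HL1 HH1]]]].
  destruct (C1_lip_y P2 H2 x0 y0) as [r2 [L2 [Hr2 [HL2 HH2]]]].
  pose proof (Rabs_pos_lt _ Hp).
  destruct (C1_cont2 P1 H1 x0 y0 (Rabs (P1 x0 y0) / 2) ltac:(lra)) as [r3 [Hr3 HH3]].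
  destruct (C1_cont2 P2 H2 x0 y0 1 Rlt_0_1) as [r4 [Hr4 HH4]].
  set (r := Rmin (Rmin r1 r2) (Rmin r3 r4)).
  pose proof (Rmin_l (Rmin r1 r2) (Rmin r3 r4)). pose proof (Rmin_r (Rmin r1 r2) (Rmin r3 r4)).
  pose proof (Rmin_l r1 r2). pose proof (Rmin_r r1 r2). pose proof (Rmin_l r3 r4). pose proof (Rmin_r r3 r4).
  fold r in H0, H3.
  exists r, ((2 * Rabs (P1 x0 y0) * L2 + (Rabs (P2 x0 y0) + 1) * L1) / (Rabs (P1 x0 y0) / 2)).
  split. { unfold r; repeat apply Rmin_pos; lra. }
  intros x y z Hx Hy Hz.
  specialize (HH3 x z ltac:(lra) ltac:(lra)). specialize (HH4 x z ltac:(lra) ltac:(lra)).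
  apply Rabs_def2 in HH3. apply Rabs_def2 in HH4.
  apply key_alg; try lra.
  - unfold Rabs in *; repeat destruct Rcase_abs; lra.
  - unfold Rabs in *; repeat destruct Rcase_abs; lra.
  - unfold Rabs at 1; destruct Rcase_abs; pose proof (Rabs_pos (P2 x0 y0));
    pose proof (Rle_abs (P2 x0 y0)); pose proof (Rle_abs (- P2 x0 y0)); rewrite Rabs_Ropp in *; lra.
  - apply HH1; lra.
  - apply HH2; lra.
  - apply Rabs_pos.
Qed.

Lemma interior_nbhd T t : 0 < t < T -> exists r, 0 < r /\ forall x, Rabs (x - t) < r -> Icc0 T x.
Proof.
  intros Ht. exists (Rmin t (T - t)). split. apply Rmin_pos; lra.
  intros x Hx. pose proof (Rmin_l t (T-t)). pose proof (Rmin_r t (T-t)).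
  apply Rabs_def2 in Hx. unfold Icc0; lra.
Qed.

Lemma cont_icc T g dg : (forall t, Icc0 T t -> has_deriv_within (Icc0 T) g t (dg t)) ->
  forall a b, 0 <= a -> b <= T -> forall t, a <= t <= b -> continuous_within (fun x => a <= x <= b) g t.
Proof.
  intros Hd a b Ha Hb t Ht. apply cw_restrict with (Icc0 T).
  apply deriv_cont with (dg t). apply Hd. unfold Icc0; lra. intros; unfold Icc0; lra.
Qed.

Lemma mono T s g dg : (forall t, Icc0 T t -> has_deriv_within (Icc0 T) g t (dg t)) ->
  (forall t, Icc0 T t -> 0 < s * dg t) ->
  forall x y, Icc0 T x -> Icc0 T y -> x < y -> s * g x < s * g y.
Proof.
  intros Hd Hp x y Hx Hy Hxy. unfold Icc0 in *.
  destruct (mvt_in g dg x y Hxy) as [c [Hc E]].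
  - intros; eapply cont_icc; eauto; lra.
  - intros t Ht. apply hdw_pt with (Icc0 T). apply Hd. unfold Icc0; lra.
    apply interior_nbhd; lra.
  - specialize (Hp c ltac:(unfold Icc0; lra)). nra.
Qed.

Lemma inj_mono T s g : (forall x y, Icc0 T x -> Icc0 T y -> x < y -> s * g x < s * g y) ->
  inj_on (Icc0 T) g.
Proof.
  intros Hm x y Hx Hy E. destruct (Rtotal_order x y) as [h|[h|h]]; auto.
  - specialize (Hm x y Hx Hy h). rewrite E in Hm. lra.
  - specialize (Hm y x Hy Hx h). rewrite E in Hm. lra.
Qed.

Lemma fdiff T s g f dg df : (s = 1 \/ s = -1) ->
  (forall t, Icc0 T t -> has_deriv_within (Icc0 T) g t (dg t)) ->
  (forall t, Icc0 T t -> has_deriv_within (Icc0 T) f t (df t)) ->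
  (forall t, Icc0 T t -> 0 < s * dg t) ->
  forall t, Icc0 T t ->
  has_deriv_within (image (Icc0 T) g) (fun u => f (invf (Icc0 T) g u)) (g t) (df t / dg t).
Proof.
  intros Hs Hg Hf Hp t Ht.
  pose proof (mono T s g dg Hg Hp) as Hm.
  apply inv_deriv; auto.
  - apply (inj_mono T s g Hm).
  - specialize (Hp t Ht). intro E; rewrite E in Hp; lra.
  - intros e He. destruct (inv_cont (fun x => s * g x) T t Hm Ht e He) as [eta [Heta H]].
    exists eta; split; auto. intros s' Hs' Hd. apply H; auto.
    replace (s * g s' - s * g t) with (s * (g s' - g t)) by ring. rewrite Rabs_mult.
    assert (Rabs s = 1) by (destruct Hs; subst; unfold Rabs; destruct Rcase_abs; lra).
    rewrite H0. lra.
Qed.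

Lemma image_conv T g dg : (forall t, Icc0 T t -> has_deriv_within (Icc0 T) g t (dg t)) ->
  forall s1, Icc0 T s1 -> forall u, (g 0 <= u <= g s1 \/ g s1 <= u <= g 0) -> image (Icc0 T) g u.
Proof.
  intros Hd s1 Hs1 u Hu. unfold Icc0 in Hs1.
  destruct (ivt_in g 0 s1 u ltac:(lra)) as [z [Hz E]]; auto.
  - intros; eapply cont_icc; eauto; lra.
  - exists z; split; auto. unfold Icc0; lra.
Qed.

Lemma compare T s sg (X1 X2 Y1 Y2 dX2 : R -> R) (P1 P2 : R -> R -> R) :
  (s = 1 \/ s = -1) -> (sg = 1 \/ sg = -1) ->
  (forall t, Icc0 T t -> has_deriv_within (Icc0 T) X1 t (P1 (X1 t) (X2 t))) ->
  (forall t, Icc0 T t -> has_deriv_within (Icc0 T) X2 t (dX2 t)) ->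
  (forall t, Icc0 T t -> has_deriv_within (Icc0 T) Y1 t (P1 (Y1 t) (Y2 t))) ->
  (forall t, Icc0 T t -> has_deriv_within (Icc0 T) Y2 t (P2 (Y1 t) (Y2 t))) ->
  (forall t, Icc0 T t -> 0 < s * P1 (X1 t) (X2 t)) ->
  (forall t, Icc0 T t -> 0 < s * P1 (Y1 t) (Y2 t)) ->
  C1_R2 P1 -> C1_R2 P2 ->
  X1 0 = Y1 0 -> X2 0 = Y2 0 ->
  (forall t, Icc0 T t -> sg * (dX2 t - P2 (X1 t) (X2 t)) <= 0) ->
  forall t1 s1, Icc0 T t1 -> Icc0 T s1 -> X1 t1 = Y1 s1 -> sg * (X2 t1 - Y2 s1) <= 0.
Proof.
  intros Hs Hsg hX1 hX2 hY1 hY2 HPX HPY C1 C2 E1 E2 Hcase t1 s1 Ht1 Hs1 Eu.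
  pose proof (cont_icc T X1 _ hX1) as cX1.
  pose proof (cont_icc T X2 _ hX2) as cX2.
  pose proof (cont_icc T Y1 _ hY1) as cY1.
  pose proof (mono T s X1 _ hX1 HPX) as mX.
  pose proof (mono T s Y1 _ hY1 HPY) as mY.
  pose proof (inj_mono T s X1 mX) as iX.
  pose proof (inj_mono T s Y1 mY) as iY.
  set (fY := fun u => Y2 (invf (Icc0 T) Y1 u)).
  assert (fYs: forall s', Icc0 T s' -> fY (Y1 s') = Y2 s').
  { intros; unfold fY; rewrite invf_spec; auto. }
  assert (fYd: forall s', Icc0 T s' -> has_deriv_within (image (Icc0 T) Y1) fY (Y1 s')
     (P2 (Y1 s') (Y2 s') / P1 (Y1 s') (Y2 s'))).
  { intros s' Hs'. apply (fdiff T s Y1 Y2 (fun t => P1 (Y1 t) (Y2 t)) (fun t => P2 (Y1 t) (Y2 t))); auto. }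
  assert (Hs1': 0 <= s1 <= T) by exact Hs1. assert (Ht1': 0 <= t1 <= T) by exact Ht1.
  assert (Step: forall t, 0 <= t <= t1 -> exists s', 0 <= s' <= s1 /\ X1 t = Y1 s').
  { intros t Ht.
    assert (A1: s * X1 0 <= s * X1 t).
    { destruct (Req_dec t 0) as [->|n]; [lra|]. left; apply mX; unfold Icc0; lra. }
    assert (A2: s * X1 t <= s * X1 t1).
    { destruct (Req_dec t t1) as [->|n]; [lra|]. left; apply mX; unfold Icc0; lra. }
    destruct (ivt_in Y1 0 s1 (X1 t) ltac:(lra)) as [z [Hz Ez]].
    - intros; apply cY1; lra.
    - rewrite <- E1, <- Eu. destruct Hs; subst; lra.
    - exists z; split; auto. }
  set (Z := fun t => fY (X1 t)).
  set (w := fun t => sg * (X2 t - Z t)).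
  set (dw := fun t => sg * (dX2 t - P2 (X1 t) (Z t) / P1 (X1 t) (Z t) * P1 (X1 t) (X2 t))).
  assert (Zc: forall t, 0 <= t <= t1 -> continuous_within (fun x => 0 <= x <= t1) Z t).
  { intros t Ht. unfold Z. apply cw_comp with (image (Icc0 T) Y1).
    - destruct (Step t Ht) as [s' [Hs' E]]. rewrite E.
      eapply deriv_cont. apply fYd. unfold Icc0; lra.
    - apply cX1; lra.
    - intros x Hx. destruct (Step x Hx) as [s' [Hs' E]]. rewrite E. exists s'; split; auto.
      unfold Icc0; lra. }
  assert (X1c: forall t, 0 <= t <= t1 -> continuous_within (fun x => 0 <= x <= t1) X1 t).
  { intros; apply cX1; lra. }
  assert (X2c: forall t, 0 <= t <= t1 -> continuous_within (fun x => 0 <= x <= t1) X2 t).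
  { intros; apply cX2; lra. }
  assert (Hsg1: Rabs sg = 1) by (destruct Hsg; subst; unfold Rabs; destruct Rcase_abs; lra).
  assert (Hw: w t1 <= 0).
  { apply (cmp 0 t1 w dw); try lra.
    - intros t Ht. unfold w. apply (cw_mult _ (fun _ => sg) (fun x => X2 x - Z x)).
      apply cw_const. apply cw_minus; auto.
    - intros t Ht.
      destruct (Step t ltac:(lra)) as [s' [Hs' E]].
      assert (s' <> 0). { intro; subst. rewrite <- E1 in E. apply iX in E; unfold Icc0; lra. }
      assert (s' <> s1). { intro; subst. rewrite <- Eu in E. apply iX in E; unfold Icc0; lra. }
      assert (dY: derivable_pt_lim fY (X1 t) (P2 (Y1 s') (Y2 s') / P1 (Y1 s') (Y2 s'))).
      { rewrite E. apply hdw_pt with (image (Icc0 T) Y1). apply fYd; unfold Icc0; lra.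
        assert (M1: s * Y1 0 < s * Y1 s') by (apply mY; unfold Icc0; lra).
        assert (M2: s * Y1 s' < s * Y1 s1) by (apply mY; unfold Icc0; lra).
        exists (Rmin (Rabs (Y1 s' - Y1 0)) (Rabs (Y1 s1 - Y1 s'))).
        pose proof (Rmin_l (Rabs (Y1 s' - Y1 0)) (Rabs (Y1 s1 - Y1 s'))).
        pose proof (Rmin_r (Rabs (Y1 s' - Y1 0)) (Rabs (Y1 s1 - Y1 s'))).
        split.
        - apply Rmin_pos; apply Rabs_pos_lt; destruct Hs; subst; lra.
        - intros x Hx. apply (image_conv T Y1 _ hY1 s1 Hs1).
          apply Rabs_def2 in Hx. unfold Rabs in *; repeat destruct Rcase_abs; destruct Hs; subst; lra. }
      assert (dX1: derivable_pt_lim X1 t (P1 (X1 t) (X2 t))).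
      { apply hdw_pt with (Icc0 T). apply hX1; unfold Icc0; lra. apply interior_nbhd; lra. }
      assert (dX2': derivable_pt_lim X2 t (dX2 t)).
      { apply hdw_pt with (Icc0 T). apply hX2; unfold Icc0; lra. apply interior_nbhd; lra. }
      assert (dZ: derivable_pt_lim Z t (P2 (Y1 s') (Y2 s') / P1 (Y1 s') (Y2 s') * P1 (X1 t) (X2 t))).
      { apply (derivable_pt_lim_comp X1 fY t); auto. }
      assert (EZ: Z t = Y2 s') by (unfold Z; rewrite E; apply fYs; unfold Icc0; lra).
      unfold dw. rewrite EZ, E. rewrite E in dZ.
      pose proof (derivable_pt_lim_scal _ sg t _ (derivable_pt_lim_minus X2 Z t _ _ dX2' dZ)) as H3.
      exact H3.
    - unfold w, Z. rewrite E1, fYs, E2 by (unfold Icc0; lra). lra.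
    - intros c Hc Hwc.
      assert (Ec: X2 c = Z c).
      { unfold w in Hwc. destruct Hsg; subst; lra. }
      assert (P0: P1 (X1 c) (X2 c) <> 0).
      { specialize (HPX c ltac:(unfold Icc0; lra)). intro E; rewrite E in HPX; lra. }
      destruct (key_local P1 P2 C1 C2 _ _ P0) as [r [K [Hr HK]]].
      destruct (X1c c ltac:(lra) r Hr) as [d1 [Hd1 HH1]].
      destruct (X2c c ltac:(lra) r Hr) as [d2 [Hd2 HH2]].
      destruct (Zc c ltac:(lra) r Hr) as [d3 [Hd3 HH3]].
      exists K, (Rmin d1 (Rmin d2 d3)). split. { repeat apply Rmin_pos; lra. }
      pose proof (Rmin_l d1 (Rmin d2 d3)). pose proof (Rmin_r d1 (Rmin d2 d3)).
      pose proof (Rmin_l d2 d3). pose proof (Rmin_r d2 d3).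
      intros t Ht Htb Hwt.
      assert (Htc: Rabs (t - c) < Rmin d1 (Rmin d2 d3)) by (rewrite Rabs_right; lra).
      specialize (HH1 t ltac:(lra) ltac:(lra)). specialize (HH2 t ltac:(lra) ltac:(lra)).
      specialize (HH3 t ltac:(lra) ltac:(lra)). rewrite <- Ec in HH3.
      specialize (HK _ _ _ HH1 HH2 HH3).
      specialize (Hcase t ltac:(unfold Icc0; lra)).
      assert (Ew: w t = Rabs (X2 t - Z t)).
      { rewrite <- (Rabs_right (w t)) by lra. unfold w. rewrite Rabs_mult, Hsg1. ring. }
      unfold dw. rewrite Ew.
      set (Q := P2 (X1 t) (X2 t) - P2 (X1 t) (Z t) * P1 (X1 t) (X2 t) / P1 (X1 t) (Z t)) in *.
      assert (EE: sg * (dX2 t - P2 (X1 t) (Z t) / P1 (X1 t) (Z t) * P1 (X1 t) (X2 t))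
                  = sg * (dX2 t - P2 (X1 t) (X2 t)) + sg * Q).
      { unfold Q, Rdiv. ring. }
      rewrite EE.
      assert (sg * Q <= Rabs Q).
      { destruct Hsg; subst. pose proof (Rle_abs Q); lra.
        pose proof (Rle_abs (- Q)); rewrite Rabs_Ropp in *; lra. }
      lra. }
  unfold w, Z in Hw. rewrite Eu, fYs in Hw by auto. exact Hw.
Qed.

Theorem mainTheorem16
  (T : R) (X1 X2 Y1 Y2 dX1 dX2 : R -> R) (Psi1 Psi2 : R -> R -> R)
  (hX1 : forall t, Icc0 T t -> has_deriv_within (Icc0 T) X1 t (dX1 t))
  (hX2 : forall t, Icc0 T t -> has_deriv_within (Icc0 T) X2 t (dX2 t))
  (hdX1c : forall t, Icc0 T t -> continuous_within (Icc0 T) dX1 t)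
  (hdX2c : forall t, Icc0 T t -> continuous_within (Icc0 T) dX2 t)
  (hPsi1 : C1_R2 Psi1) (hPsi2 : C1_R2 Psi2)
  (hY1 : forall t, Icc0 T t -> has_deriv_within (Icc0 T) Y1 t (Psi1 (Y1 t) (Y2 t)))
  (hY2 : forall t, Icc0 T t -> has_deriv_within (Icc0 T) Y2 t (Psi2 (Y1 t) (Y2 t)))
  (h0 : X1 0 = Y1 0 /\ X2 0 = Y2 0)
  (hsign :
     (0 < Psi1 (X1 0) (X2 0) /\
      forall t, 0 < t <= T -> 0 < Psi1 (X1 t) (X2 t) /\ 0 < Psi1 (Y1 t) (Y2 t)) \/
     (Psi1 (X1 0) (X2 0) < 0 /\
      forall t, 0 < t <= T -> Psi1 (X1 t) (X2 t) < 0 /\ Psi1 (Y1 t) (Y2 t) < 0))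
  (hdX1 : forall t, Icc0 T t -> dX1 t = Psi1 (X1 t) (X2 t))
  (hcase : (forall t, Icc0 T t -> dX2 t <= Psi2 (X1 t) (X2 t)) \/
           (forall t, Icc0 T t -> dX2 t >= Psi2 (X1 t) (X2 t))) :
  inj_on (Icc0 T) X1 /\ inj_on (Icc0 T) Y1 /\
  exists fX fY : R -> R,
    (forall t, Icc0 T t -> fX (X1 t) = X2 t) /\
    (forall t, Icc0 T t -> fY (Y1 t) = Y2 t) /\
    (forall u, image (Icc0 T) X1 u -> u <> X1 0 ->
       exists l, has_deriv_within (image (Icc0 T) X1) fX u l) /\
    (forall u, image (Icc0 T) Y1 u -> u <> X1 0 ->
       exists l, has_deriv_within (image (Icc0 T) Y1) fY u l) /\
    ((forall t, Icc0 T t -> dX2 t <= Psi2 (X1 t) (X2 t)) ->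
       forall u, image (Icc0 T) X1 u -> image (Icc0 T) Y1 u -> fX u <= fY u) /\
    ((forall t, Icc0 T t -> dX2 t >= Psi2 (X1 t) (X2 t)) ->
       forall u, image (Icc0 T) X1 u -> image (Icc0 T) Y1 u -> fX u >= fY u).
Proof.
  destruct h0 as [E1 E2].
  assert (Hs: exists s, (s = 1 \/ s = -1) /\
     (forall t, Icc0 T t -> 0 < s * Psi1 (X1 t) (X2 t)) /\
     (forall t, Icc0 T t -> 0 < s * Psi1 (Y1 t) (Y2 t))).
  { destruct hsign as [[H0 H]|[H0 H]]; [exists 1|exists (-1)]; split; auto; split;
      intros t [Ht1 Ht2]; (destruct (Req_dec t 0) as [->|Hn];
      [ try rewrite <- E1, <- E2; lra | specialize (H t ltac:(lra)); lra ]). }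
  destruct Hs as [s [Hs [HPX HPY]]].
  assert (hX1' : forall t, Icc0 T t -> has_deriv_within (Icc0 T) X1 t (Psi1 (X1 t) (X2 t))).
  { intros t Ht; rewrite <- hdX1; auto. }
  assert (HPX' : forall t, Icc0 T t -> 0 < s * dX1 t).
  { intros t Ht; rewrite hdX1; auto. }
  pose proof (mono T s X1 _ hX1 HPX') as mX.
  pose proof (mono T s Y1 _ hY1 HPY) as mY.
  pose proof (inj_mono T s X1 mX) as iX.
  pose proof (inj_mono T s Y1 mY) as iY.
  split; auto. split; auto.
  exists (fun u => X2 (invf (Icc0 T) X1 u)), (fun u => Y2 (invf (Icc0 T) Y1 u)).
  split. { intros; rewrite invf_spec; auto. }
  split. { intros; rewrite invf_spec; auto. }
  split.
  { intros u [t [Ht Eu]] _. subst u. eexists. apply (fdiff T s X1 X2 dX1 dX2); auto. }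
  split.
  { intros u [t [Ht Eu]] _. subst u. eexists.
    apply (fdiff T s Y1 Y2 (fun t => Psi1 (Y1 t) (Y2 t)) (fun t => Psi2 (Y1 t) (Y2 t))); auto. }
  split.
  - intros Hc u [t [Ht Eu]] [s' [Hs' Eu']]. subst u. rewrite !invf_spec; auto.
    rewrite <- Eu'. rewrite invf_spec; auto.
    pose proof (compare T s 1 X1 X2 Y1 Y2 dX2 Psi1 Psi2 Hs (or_introl eq_refl) hX1' hX2 hY1 hY2
      HPX HPY hPsi1 hPsi2 E1 E2 ltac:(intros t0 Ht0; specialize (Hc t0 Ht0); lra) t s' Ht Hs' (eq_sym Eu')).
    lra.
  - intros Hc u [t [Ht Eu]] [s' [Hs' Eu']]. subst u. rewrite !invf_spec; auto.
    rewrite <- Eu'. rewrite invf_spec; auto.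
    pose proof (compare T s (-1) X1 X2 Y1 Y2 dX2 Psi1 Psi2 Hs (or_intror eq_refl) hX1' hX2 hY1 hY2
      HPX HPY hPsi1 hPsi2 E1 E2 ltac:(intros t0 Ht0; specialize (Hc t0 Ht0); lra) t s' Ht Hs' (eq_sym Eu')).
    lra.
Qed.
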